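(* Let $G$ be an undirected graph. If all the prime components of $G$ are Generalized Bartlett graphs, then $G$ is a Generalized Bartlett graph.
   Context: A graph $G=(V,E)$ has a decomposition into components $G_1=(V_1,E_1)$ and $G_2=(V_2,E_2)$ (the induced subgraphs on $V_1,V_2$) if $V=V_1\cup V_2$ with $(V_1\setminus V_2)\cup(V_2\setminus V_1)\ne\emptyset$, $V_1\cap V_2\neq\emptyset$ induces a complete subgraph, and $V_1\cap V_2$ separates $V_1\setminus V_2$ from $V_2\setminus V_1$ (no edge joins a vertex of $V_1\setminus V_2$ to one of $V_2\setminus V_1$). A graph admitting no such decomposition is prime; repeated decomposition breaks any graph into prime components. For an ordering $\sigma:V\to\{1,\dots,p\}$, set $E^\sigma_0=E$, $E^\sigma_i=E^\sigma_{i-1}\cup\{\{u,v\}:u\ne v,\sigma(u)>i,\sigma(v)>i,\{u,\sigma^{-1}(i)\},\{v,\sigma^{-1}(i)\}\in E^\sigma_{i-1}\}$ for $i=1,\dots,p-2$, and $D^\sigma(E)=E^\sigma_{p-2}$. $G$ is Generalized Bartlett if some ordering $\sigma$ admits no $u,v,w$ with $\{u,v\},\{v,w\},\{u,w\}\notin E$ but all in $D^\sigma(E)$. *)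

(* Defs.v *)
From mathcomp Require Import all_boot.
Set Implicit Arguments.
Unset Strict Implicit.
Unset Printing Implicit Defensive.

(* A simple undirected graph is a symmetric irreflexive relation [e] on a
   finite vertex type [T].  Induced subgraphs are represented by their vertex
   sets [V : {set T}] (edges: those of [e] between vertices of [V]). *)

Section Graphs.
Variables (T : finType) (e : rel T).

Definition decomposition (V V1 V2 : {set T}) : Prop :=
  [/\ V = V1 :|: V2,
      [&& V1 :\: V2 != set0, V2 :\: V1 != set0 & V1 :&: V2 != set0],
      (forall x y, x \in V1 :&: V2 -> y \in V1 :&: V2 -> x != y -> e x y)
    & (forall x y, x \in V1 :\: V2 -> y \in V2 :\: V1 -> ~~ e x y)].

Definition prime_graph (V : {set T}) : Prop :=
  ~ exists V1 V2, decomposition V V1 V2.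

Inductive decomposes_into (P : {set T} -> Prop) : {set T} -> Prop :=
| DI_prime V : prime_graph V -> P V -> decomposes_into P V
| DI_decomp V V1 V2 : decomposition V V1 V2 ->
    decomposes_into P V1 -> decomposes_into P V2 -> decomposes_into P V.

(* An ordering sigma of V is given as a duplicate-free sequence [s]
   enumerating V: sigma u = (index u s).+1, sigma^{-1}(i) = the w with
   (index w s).+1 = i. *)
Definition sigma (s : seq T) (u : T) : nat := (index u s).+1.

Definition E0 (V : {set T}) : rel T :=
  fun u v => [&& e u v, u \in V & v \in V].

Definition fill_step (s : seq T) (E : rel T) (i : nat) : rel T :=
  fun u v => E u v ||
    [&& u != v, u \in s, v \in s, i < sigma s u, i < sigma s v &
        [exists w : T, [&& w \in s, sigma s w == i, E u w & E v w]]].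

Fixpoint Esigma (V : {set T}) (s : seq T) (k : nat) : rel T :=
  match k with
  | 0 => E0 V
  | k'.+1 => fill_step s (Esigma V s k') k
  end.

Definition Dsigma (V : {set T}) (s : seq T) : rel T :=
  Esigma V s (size s - 2).

Definition is_ordering (V : {set T}) (s : seq T) : Prop :=
  uniq s /\ (forall x, (x \in s) = (x \in V)).

Definition gen_bartlett (V : {set T}) : Prop :=
  exists s, is_ordering V s /\
    ~ exists u v w,
        [/\ [&& ~~ E0 V u v, ~~ E0 V v w & ~~ E0 V u w],
            Dsigma V s u v, Dsigma V s v w & Dsigma V s u w].

End Graphs.

(* Main.v *)
Require Import Defs.
From mathcomp Require Import all_boot.
From mathcomp Require Import zify.
Set Implicit Arguments.
Unset Strict Implicit.
Unset Printing Implicit Defensive.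

Section Conn.
Variable T : finType.

Inductive conn (H : rel T) (P : pred T) : T -> T -> Prop :=
| cstep a b : H a b -> conn H P a b
| ctrans a c b : conn H P a c -> P c -> conn H P c b -> conn H P a b.

Lemma conn_mono (H1 H2 : rel T) (P1 P2 : pred T) a b :
  (forall x y, H1 x y -> conn H2 P2 x y) -> (forall c, P1 c -> P2 c) ->
  conn H1 P1 a b -> conn H2 P2 a b.
Proof.
move=> HH HP; elim=> [x y /HH //|x c y _ IH1 Pc _ IH2].
exact: ctrans IH1 (HP _ Pc) IH2.
Qed.

Lemma conn_sym (H : rel T) (P : pred T) a b : symmetric H -> conn H P a b -> conn H P b a.
Proof.
move=> sH; elim=> [x y Hxy|x c y _ IH1 Pc _ IH2].
  by apply: cstep; rewrite sH.
exact: ctrans IH2 Pc IH1.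
Qed.

Lemma conn_ends (H : rel T) (P : pred T) (U : pred T) a b :
  (forall x y, H x y -> U x && U y) -> conn H P a b -> U a /\ U b.
Proof.
move=> HU; elim=> [x y /HU/andP[]//|x c y _ [? _] _ _ [_ ?]]; by [].
Qed.

Lemma conn_supp (H : rel T) (P : pred T) (U : pred T) a b :
  (forall x y, H x y -> U x && U y) -> conn H P a b ->
  conn H (fun c => P c && U c) a b.
Proof.
move=> HU; elim=> [x y Hxy|x c y C1 IH1 Pc C2 IH2]; first exact: cstep.
have [_ Uc] := conn_ends HU C1.
by apply: ctrans IH1 _ IH2; rewrite Pc Uc.
Qed.

Lemma conn_noint (H : rel T) (P : pred T) a b :
  (forall c, ~~ P c) -> conn H P a b -> H a b.
Proof. by move=> nP; case=> // x c y _ Pc _; move: (nP c); rewrite Pc. Qed.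

Lemma conn_split (H : rel T) (P : pred T) w a b : conn H P a b ->
  conn H (fun c => P c && (c != w)) a b \/
  ((a = w \/ conn H (fun c => P c && (c != w)) a w) /\
   (w = b \/ conn H (fun c => P c && (c != w)) w b)).
Proof.
set P' := fun c => _.
elim=> [x y Hxy|x c y _ IH1 Pc _ IH2]; first by left; apply: cstep.
have [E|cw] := eqVneq c w.
  subst c; right; split.
    by case: IH1 => [|[] //]; right.
  by case: IH2 => [|[] //]; right.
have P'c : P' c by rewrite /P' Pc cw.
case: IH1 => [C1|[A1 B1]]; case: IH2 => [C2|[A2 B2]].
- by left; apply: ctrans C1 P'c C2.
- right; split; last by [].
  case: A2 => [E|C3]; first by move: cw; rewrite E eqxx.
  by right; apply: ctrans C1 P'c C3.
- right; split; first by [].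
  case: B1 => [E|C3]; first by move: cw; rewrite E eqxx.
  by right; apply: ctrans C3 P'c C2.
- by right.
Qed.

Definition oconn (H : rel T) (P : pred T) a b := a = b \/ conn H P a b.

Lemma oconn_join (H : rel T) (P : pred T) a c b :
  oconn H P a c -> P c -> oconn H P c b -> oconn H P a b.
Proof.
move=> [->|C1] Pc [<-|C2]; [by left|by right|by right|].
by right; apply: ctrans C1 Pc C2.
Qed.

Lemma oconn_joinc (H : rel T) (P : pred T) a c b :
  oconn H P a c -> P c -> conn H P c b -> conn H P a b.
Proof. by move=> [->//|C1] Pc C2; apply: ctrans C1 Pc C2. Qed.

Lemma oconn_join' (H : rel T) (P : pred T) a c b :
  oconn H P a c -> c = a \/ P c -> oconn H P c b -> oconn H P a b.
Proof.
move=> O1 [E|Pc] O2; last exact: oconn_join O1 Pc O2.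
by subst c.
Qed.

Lemma oconn_join'' (H : rel T) (P : pred T) a c b :
  oconn H P a c -> c = b \/ P c -> oconn H P c b -> oconn H P a b.
Proof.
move=> O1 [E|Pc] O2; last exact: oconn_join O1 Pc O2.
by subst c.
Qed.

Lemma conn_short (H H2 : rel T) (P : pred T) (X : pred T) a b :
  symmetric H ->
  (forall x y, ~~ X x -> ~~ X y -> H x y -> H2 x y) ->
  (forall x y x' y', ~~ X x -> ~~ X y -> x != y -> X x' -> X y' ->
      H x x' -> H y y' -> H2 x y) ->
  conn H P a b ->
  [/\ ~~ X a -> ~~ X b -> oconn H2 P a b,
      ~~ X a -> X b -> exists q y, [/\ ~~ X q, X y, H q y &
                                   q = a \/ (P q /\ conn H2 P a q)] &
      X a -> ~~ X b -> exists q y, [/\ ~~ X q, X y, H q y &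
                                   q = b \/ (P q /\ conn H2 P q b)]].
Proof.
move=> sH H12 Hcl; elim=> [x y Hxy|x c y _ [I1 J1 K1] Pc _ [I2 J2 K2]].
  split=> Xx Xy.
  - by right; apply: cstep; apply: H12.
  - by exists x, y; split=> //; left.
  - by exists y, x; split=> //; [rewrite sH|left].
split=> Xx Xy.
- case Xc: (X c).
  + have [q1 [y1 [nq1 Xy1 Hq1 D1]]] := J1 Xx Xc.
    have [q2 [y2 [nq2 Xy2 Hq2 D2]]] := K2 Xc Xy.
    have O1 : oconn H2 P x q1 /\ (q1 = x \/ P q1).
      by case: D1 => [->|[??]]; split; (try by left); right.
    have O2 : oconn H2 P q2 y /\ (q2 = y \/ P q2).
      by case: D2 => [->|[??]]; split; (try by left); right.
    case: O1 => O1 P1; case: O2 => O2 P2.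
    have [Eq|nq] := eqVneq q1 q2.
      subst q2; exact: oconn_join' O1 P1 O2.
    apply: oconn_join' O1 P1 _.
    apply: oconn_join'' _ P2 O2.
    by right; apply: cstep; apply: Hcl nq Xy1 Xy2 Hq1 Hq2.
  + by apply: oconn_join (I1 Xx (negbT Xc)) Pc (I2 (negbT Xc) Xy).
- case Xc: (X c); first exact: J1.
  have O1 := I1 Xx (negbT Xc).
  have [q [y' [nq Xy' Hq D]]] := J2 (negbT Xc) Xy.
  exists q, y'; split=> //.
  case: D => [Eq|[Pq Cq]].
    case: O1 => [E|C1]; first by left; rewrite Eq E.
    by right; split; [rewrite Eq|rewrite Eq].
  by right; split=> //; apply: oconn_joinc O1 Pc Cq.
- case Xc: (X c); first exact: K2.
  have O2 := I2 (negbT Xc) Xy.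
  have [q [y' [nq Xy' Hq D]]] := K1 Xx (negbT Xc).
  exists q, y'; split=> //.
  case: D => [Eq|[Pq Cq]].
    case: O2 => [E|C2]; first by left; rewrite Eq E.
    by right; split; rewrite Eq.
  right; split=> //; case: O2 => [<-//|C2]; exact: ctrans Cq Pc C2.
Qed.

Definition Dr (H : rel T) (r : T -> nat) u v :=
  u != v /\ conn H (fun c => (r c < r u) && (r c < r v)) u v.

Definition GBr (H B : rel T) (r : T -> nat) :=
  forall u v w, Dr H r u v -> Dr H r v w -> Dr H r u w -> B u v || B v w || B u w.

Lemma Dr_sym (H : rel T) r u v : symmetric H -> Dr H r u v -> Dr H r v u.
Proof.
move=> sH [nuv C]; split; first by rewrite eq_sym.
apply: conn_sym sH _; apply: conn_mono C => [x y|c]; first exact: cstep.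
by rewrite andbC.
Qed.

Lemma Dr_earliest (H : rel T) r u v w : symmetric H ->
  Dr H r u v -> Dr H r u w -> r u < r v -> r u < r w -> v != w -> Dr H r v w.
Proof.
move=> sH [_ C1] [_ C2] ltv ltw nvw; split=> //.
apply: (@ctrans _ _ v u w).
- apply: conn_sym sH _; apply: conn_mono C1 => [x y|c]; first exact: cstep.
  move=> /andP[h1 h2]; apply/andP; split; lia.
- by rewrite ltv ltw.
- apply: conn_mono C2 => [x y|c]; first exact: cstep.
  move=> /andP[h1 h2]; apply/andP; split; lia.
Qed.

Lemma GBr_min (H B : rel T) r (U : pred T) :
  symmetric H -> symmetric B -> (forall x y, H x y -> U x && U y) ->
  {in U &, injective r} ->
  (forall u v w, ~~ B u v -> ~~ B u w -> ~~ B v w -> r u < r v -> r u < r w ->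
     Dr H r u v -> Dr H r u w -> Dr H r v w -> False) ->
  GBr H B r.
Proof.
move=> sH sB HU rinj K u v w Duv Dvw Duw.
case Buv: (B u v) => //; case Bvw: (B v w) => //; case Buw: (B u w) => //=.
exfalso.
have [nuv Cuv] := Duv; have [nvw Cvw] := Dvw; have [nuw Cuw] := Duw.
have [Uu Uv] := conn_ends HU Cuv; have [_ Uw] := conn_ends HU Cvw.
have ruv : r u != r v by apply: contra nuv => /eqP/rinj -> //.
have rvw : r v != r w by apply: contra nvw => /eqP/rinj -> //.
have ruw : r u != r w by apply: contra nuw => /eqP/rinj -> //.
have nBvu : ~~ B v u by rewrite sB Buv.
have nBwv : ~~ B w v by rewrite sB Bvw.
have nBwu : ~~ B w u by rewrite sB Buw.
have Dvu := Dr_sym sH Duv; have Dwv := Dr_sym sH Dvw; have Dwu := Dr_sym sH Duw.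
case: (ltnP (r u) (r v)) => h1.
  case: (ltnP (r u) (r w)) => h2.
    by apply: (K u v w); rewrite ?Buv ?Buw ?Bvw.
  have h4 : r w < r u by rewrite ltn_neqAle eq_sym ruw h2.
  have h5 : r w < r v := leq_ltn_trans h2 h1.
  by apply: (K w u v); rewrite ?nBwu ?nBwv ?Buv.
case: (ltnP (r v) (r w)) => h3.
  have h4 : r v < r u by rewrite ltn_neqAle eq_sym ruv h1.
  by apply: (K v u w); rewrite ?nBvu ?Buw ?Bvw.
have h4 : r w < r v by rewrite ltn_neqAle eq_sym rvw h3.
have h5 : r w < r u := leq_trans h4 h1.
by apply: (K w u v); rewrite ?nBwu ?nBwv ?Buv.
Qed.
End Conn.

Section Elim.
Variable T : finType.
Variables (V : {set T}) (H : rel T) (x : T).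
Hypothesis HV : forall a b, H a b -> (a \in V) && (b \in V).
Hypothesis sH : symmetric H.
Hypothesis iH : irreflexive H.

Definition Hx : rel T := fun a b =>
  [&& a != x, b != x & H a b || [&& a != b, H a x & H b x]].

Lemma Hx_supp a b : Hx a b -> (a \in V :\ x) && (b \in V :\ x).
Proof.
case/and3P=> ax bx /orP[/HV/andP[??]|/and3P[_ /HV/andP[??] /HV/andP[??]]];
  by rewrite !in_setD1 ax bx; apply/andP.
Qed.

Lemma Hx_sym : symmetric Hx.
Proof.
move=> a b; rewrite /Hx sH (eq_sym a b).
by case: (a != x); case: (b != x); case: (H b a); case: (a != b); case: (H a x); case: (H b x).
Qed.

Lemma Hx_irr : irreflexive Hx.
Proof. by move=> a; rewrite /Hx iH eqxx /= !andbF. Qed.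

Lemma cond1 : forall y z, ~~ pred1 x y -> ~~ pred1 x z -> H y z -> Hx y z.
Proof. move=> y z /= yx zx Hyz; by rewrite /Hx yx zx Hyz. Qed.

Lemma cond2 : forall y z y' z', ~~ pred1 x y -> ~~ pred1 x z -> y != z ->
  pred1 x y' -> pred1 x z' -> H y y' -> H z z' -> Hx y z.
Proof.
move=> y z y' z' /= yx zx nyz /eqP-> /eqP-> Hy Hz.
by rewrite /Hx yx zx nyz Hy Hz !orbT.
Qed.

Lemma short1 (rr : T -> nat) a b :
  Dr H rr a b -> a != x -> b != x -> Dr Hx rr a b.
Proof.
move=> [nab C] ax bx; split=> //.
have [I _ _] := conn_short sH cond1 cond2 C.
case: I => //= E; by move: nab; rewrite E eqxx.
Qed.

Lemma short2 (rr : T -> nat) a :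
  Dr H rr a x -> a != x -> exists q, [/\ q != x, H q x & q = a \/ rr q < rr a].
Proof.
move=> [nab C] ax.
have [_ J _] := conn_short sH cond1 cond2 C.
have [q [y [qx /eqP Ey Hq D]]] := J ax (eqxx x).
subst y; exists q; split=> //.
by case: D => [->|[/andP[? _] _]]; [left|right].
Qed.

Lemma Dr_x0 (rr : T -> nat) a b :
  (forall c, c != x -> rr x < rr c) -> Dr H rr a b -> a = x \/ b = x -> H a b.
Proof.
move=> rmin [nab C] E; apply: conn_noint C => c; apply/negP => /andP[h1 h2].
case: E => E; subst.
- have [cx|cx] := eqVneq c x; first by subst; rewrite ltnn in h1.
  by have := rmin _ cx; lia.
- have [cx|cx] := eqVneq c x; first by subst; rewrite ltnn in h2.
  by have := rmin _ cx; lia.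
Qed.

End Elim.

Lemma nat1 N k : N = N + k.+1 -> False. Proof. lia. Qed.
Lemma nat2 N m : m < N -> N = m -> False. Proof. lia. Qed.
Lemma nat3 N m k : m < N -> m = N + k.+1 -> False. Proof. lia. Qed.
Lemma nat4 N k j : N + k.+1 = N + j.+1 -> k = j. Proof. lia. Qed.
Lemma nat5 N m k : m < N -> m < N + k.+1. Proof. lia. Qed.

Lemma nat6 N m k : N + k < m -> m < N -> False. Proof. lia. Qed.
Lemma nat7 m k : m < k -> k < m -> False. Proof. lia. Qed.

Section CL.
Variable T : finType.

Lemma CL n : forall (V : {set T}) (H B : rel T) (r : T -> nat) (C : {set T}),
  #|V| = n ->
  (forall a b, H a b -> (a \in V) && (b \in V)) ->
  symmetric H -> irreflexive H -> symmetric B ->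
  {in V &, injective r} -> GBr H B r ->
  C \subset V -> (forall a b, a \in C -> b \in C -> a != b -> H a b) ->
  exists r', [/\ {in V &, injective r'}, GBr H B r' &
     forall a c, a \in V -> a \notin C -> c \in C -> r' a < r' c].
Proof.
elim: n => [|n IH] V H B r C cV HV sH iH sB rinj GB sCV Ccl.
  exists r; split=> // a c aV; move: cV => /eqP; rewrite cards_eq0 => /eqP V0.
  by move: aV; rewrite V0 inE.
have [i0 Vi0] : exists i0, i0 \in V by apply/card_gt0P; rewrite cV.
case: (arg_minnP r Vi0) => x Vx0 xmin.
have Vx : x \in V := Vx0.
have rmin : forall c, c \in V -> c != x -> r x < r c.
  move=> c cVV cx; rewrite ltn_neqAle xmin // andbT.
  by apply: contra cx => /eqP/rinj E; rewrite E.
set V' := V :\ x.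
have cV' : #|V'| = n.
  have h := cardsD1 x V; rewrite Vx cV add1n in h; by case: h.
have HV' := Hx_supp HV (x := x).
have sH' := Hx_sym x sH.
have iH' := Hx_irr x iH.
have rinj' : {in V' &, injective r}.
  by move=> a b; rewrite !in_setD1 => /andP[_ aV] /andP[_ bV]; apply: rinj.
have GB' : GBr (Hx H x) B r.
  move=> u v w D1 D2 D3.
  have lift : forall a b, Dr (Hx H x) r a b -> Dr H r a b.
    move=> a b [nab Cab]; split=> //.
    have [aV' bV'] := conn_ends HV' Cab.
    move: aV' bV'; rewrite !in_setD1 => /andP[ax aV] /andP[bx bV].
    apply: conn_mono Cab => // y z; rewrite /Hx => /and3P[_ _ /orP[Hyz|/and3P[_ Hyx Hzx]]].
      exact: cstep.
    apply: (@ctrans _ _ _ y x z); first exact: cstep.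
      by rewrite !rmin.
    by apply: cstep; rewrite sH.
  by apply: GB; apply: lift.
have edge : forall a b, H a b -> Dr H r a b.
  move=> a b Hab; split; last exact: cstep.
  by apply: contraTneq Hab => ->; rewrite iH.
have via : forall a b, H a x -> H b x -> a != b -> Dr H r a b.
  move=> a b Ha Hb nab; split=> //.
  have /andP[aV _] := HV _ _ Ha; have /andP[bV _] := HV _ _ Hb.
  have ax : a != x by apply: contraTneq Ha => ->; rewrite iH.
  have bx : b != x by apply: contraTneq Hb => ->; rewrite iH.
  apply: (@ctrans _ _ _ a x b); first exact: cstep.
    by rewrite !rmin.
  by apply: cstep; rewrite sH.
case: (boolP (x \in C)) => xC; last first.
  have sub : C \subset V'.
    apply/subsetP => a aC; rewrite in_setD1 (subsetP sCV _ aC) andbT.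
    by apply: contraNneq xC => <-.
  have cl : forall a b, a \in C -> b \in C -> a != b -> Hx H x a b.
    move=> a b aC bC nab; rewrite /Hx Ccl // andbT.
    by rewrite (contraNneq _ xC) ?(contraNneq _ xC) // => <-.
  have [r'' [rinj'' GB'' last'']] := IH V' (Hx H x) B r C cV' HV' sH' iH' sB rinj' GB' sub cl.
  pose r' := fun a => if a == x then 0 else (r'' a).+1.
  have r'min : forall c, c != x -> r' x < r' c.
    by move=> c cx; rewrite /r' eqxx (negbTE cx).
  have conv : forall a b, Dr H r' a b -> a != x -> b != x -> Dr (Hx H x) r'' a b.
    move=> a b D ax bx; have [nab Cab] := short1 sH D ax bx; split=> //.
    apply: conn_mono (conn_supp HV' Cab) => [y z|c /=]; first exact: cstep.
    move=> /andP[/andP[h1 h2]]; rewrite in_setD1 => /andP[cx _].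
    by move: h1 h2; rewrite /r' (negbTE ax) (negbTE bx) (negbTE cx) !ltnS => -> ->.
  exists r'; split.
  - move=> a b aV bV; rewrite /r'.
    case: (eqVneq a x) => ax; case: (eqVneq b x) => bx //; first by rewrite ax bx.
    by move=> [] /rinj''; apply; rewrite in_setD1 ?ax ?bx.
  - move=> u v w D1 D2 D3.
    case: (eqVneq u x) => ux.
      subst u.
      have Hv := Dr_x0 r'min D1 (or_introl erefl).
      have Hw := Dr_x0 r'min D3 (or_introl erefl).
      apply: GB; [exact: edge|apply: via => //; [by rewrite sH|by rewrite sH|by case: D2]|exact: edge].
    case: (eqVneq v x) => vx.
      subst v.
      have Hu := Dr_x0 r'min D1 (or_intror erefl).
      have Hw := Dr_x0 r'min D2 (or_introl erefl).
      apply: GB; [exact: edge|exact: edge|apply: via => //; [by rewrite sH|by case: D3]].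
    case: (eqVneq w x) => wx.
      subst w.
      have Hu := Dr_x0 r'min D3 (or_intror erefl).
      have Hv := Dr_x0 r'min D2 (or_intror erefl).
      apply: GB; [apply: via => //; by case: D1|exact: edge|exact: edge].
    by apply: GB''; apply: conv.
  - move=> a c aV aC cC; rewrite /r'.
    have cx : c != x by apply: contraNneq xC => <-.
    rewrite (negbTE cx); case: eqVneq => // ax.
    by rewrite ltnS last'' // in_setD1 ax.
set Q := [set a | H a x].
have Qx_ne : forall a, a \in Q -> a != x.
  by move=> a; rewrite inE => Ha; apply: contraTneq Ha => ->; rewrite iH.
have subQ : Q \subset V'.
  apply/subsetP => a aQ; rewrite in_setD1 Qx_ne //=.
  by move: aQ; rewrite inE => /HV/andP[].
have clQ : forall a b, a \in Q -> b \in Q -> a != b -> Hx H x a b.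
  move=> a b aQ bQ nab; rewrite /Hx !Qx_ne //=.
  by move: aQ bQ; rewrite !inE => -> ->; rewrite nab !orbT.
have [r'' [rinj'' GB'' lastQ]] := IH V' (Hx H x) B r Q cV' HV' sH' iH' sB rinj' GB' subQ clQ.
set N := (\max_(a in V) r'' a).+1.
have hN : forall a, a \in V -> r'' a < N.
  by move=> a aV; rewrite ltnS; exact: leq_bigmax_cond.
have CQ : forall c, c \in C -> c != x -> c \in Q.
  by move=> c cC cx; rewrite inE; apply: Ccl.
pose r' := fun a => if a == x then N else if a \in C then N + (r'' a).+1 else r'' a.
have V'P : forall a, a \in V -> a != x -> a \in V' by move=> a aV ax; rewrite in_setD1 ax.
have rinjr' : {in V &, injective r'}.
  move=> a b aV bV; rewrite /r'.
  have ha := hN a aV; have hb := hN b bV.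
  case: (eqVneq a x) => ax; case: (eqVneq b x) => bx; first by rewrite ax bx.
  + by case: (b \in C) => E; [move/nat1: E|move/(nat2 hb): E].
  + by case: (a \in C) => E; [move/esym/nat1: E|move/esym/(nat2 ha): E].
  + have inj2 : r'' a = r'' b -> a = b by apply: rinj''; apply: V'P.
    case: (a \in C); case: (b \in C) => E.
    * by apply: inj2; apply: nat4 E.
    * by move/esym/(nat3 hb): E.
    * by move/(nat3 ha): E.
    * exact: inj2.
exists r'; split => //.
- apply: (GBr_min (U := mem V)) => // u v w nBuv nBuw nBvw ruv ruw Duv Duw Dvw.
  have [_ Cuv] := Duv; have [_ Cuw] := Duw.
  have [uV vV] := conn_ends HV Cuv; have [_ wV] := conn_ends HV Cuw.
  pose Qx a := (a == x) || (a \in Q).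
  have starQ : forall a b, Qx a -> Qx b -> a != b -> Dr H r a b.
    move=> a b /orP[/eqP->|aQ] /orP[/eqP->|bQ] nab.
    - by rewrite eqxx in nab.
    - by apply: edge; move: bQ; rewrite inE sH.
    - by apply: edge; move: aQ; rewrite inE.
    - by apply: via => //; [move: aQ|move: bQ]; rewrite inE.
  have laterQx : forall b, b \in V -> r' u < r' b -> Qx u -> Qx b.
    move=> b bV rub Qu; rewrite /Qx; case: (eqVneq b x) => //= bx.
    case bC: (b \in C); first exact: CQ.
    have rb : r' b = r'' b by rewrite /r' (negbTE bx) bC.
    have hb := hN b bV.
    case/orP: Qu => [/eqP ux|uQ].
      by exfalso; move: rub; rewrite rb /r' ux eqxx => h; apply: (nat7 hb h).
    have ux := Qx_ne u uQ.
    case uC: (u \in C).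
      by exfalso; move: rub; rewrite rb /r' (negbTE ux) uC => h; apply: (nat6 h hb).
    apply: contraT => nbQ; have h2 := lastQ b u (V'P b bV bx) nbQ uQ.
    by exfalso; move: rub; rewrite rb /r' (negbTE ux) uC => h1; apply: (nat7 h1 h2).
  case Qu: (Qx u).
    have Qv := laterQx v vV ruv Qu; have Qw := laterQx w wV ruw Qu.
    have := GB u v w (starQ u v Qu Qv Duv.1) (starQ v w Qv Qw Dvw.1)
                     (starQ u w Qu Qw Duw.1).
    by rewrite (negbTE nBuv) (negbTE nBvw) (negbTE nBuw).
  have ux : u != x by move: Qu; rewrite /Qx; case: eqVneq.
  have uQ : u \notin Q by move: Qu; rewrite /Qx; case: (u \in Q); rewrite ?orbT.
  have uC : u \notin C by apply: contra uQ => uC; apply: CQ.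
  have ru : r' u = r'' u by rewrite /r' (negbTE ux) (negbTE uC).
  have uV' := V'P u uV ux.
  have hu := hN u uV.
  have ord : forall a, a \in V' -> r' a < r' u -> r'' a < r'' u.
    move=> a; rewrite in_setD1 => /andP[ax aV]; rewrite ru /r' (negbTE ax).
    by case aC: (a \in C) => // h; exfalso; apply: (nat6 h hu).
  have ord2 : forall b, b \in V -> b != x -> r' u < r' b -> r'' u < r'' b.
    move=> b bV bx; case bC: (b \in C).
      by move=> _; apply: lastQ => //; apply: CQ.
    by rewrite ru /r' (negbTE bx) bC.
  have notx : forall b, Dr H r' u b -> b != x.
    move=> b D; apply/eqP => E; subst b.
    have [q [qx Hq [E|lt]]] := short2 sH D ux.
      by subst q; move: uQ; rewrite inE Hq.
    have qQ : q \in Q by rewrite inE.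
    have qV' : q \in V' := subsetP subQ q qQ.
    have h1 := ord q qV' lt.
    have h2 := lastQ u q uV' uQ qQ.
    exact: nat7 h1 h2.
  have vx := notx v Duv; have wx := notx w Duw.
  have conv : forall b, b \in V -> b != x -> r' u < r' b -> Dr H r' u b ->
      Dr (Hx H x) r'' u b.
    move=> b bV bx rub D; have [nub Cub] := short1 sH D ux bx; split=> //.
    apply: conn_mono (conn_supp HV' Cub) => [y z|c /=]; first exact: cstep.
    move=> /andP[/andP[h1 h2] cV2]; have hc := ord c cV2 h1.
    by rewrite hc /=; apply: ltn_trans hc (ord2 b bV bx rub).
  have D1 := conv v vV vx ruv Duv; have D3 := conv w wV wx ruw Duw.
  have D2 := Dr_earliest sH' D1 D3 (ord2 v vV vx ruv) (ord2 w wV wx ruw) Dvw.1.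
  have := GB'' u v w D1 D2 D3.
  by rewrite (negbTE nBuv) (negbTE nBvw) (negbTE nBuw).
- move=> a c aV aC cC; rewrite /r'.
  have ax : a != x by apply: contraNneq aC => ->.
  rewrite (negbTE ax) (negbTE aC); case: eqVneq => _; first exact: hN.
  by rewrite cC; apply: nat5; apply: hN.
Qed.
End CL.

Section Bridge.
Variable T : finType.
Variable e : rel T.
Hypothesis e_sym : symmetric e.
Hypothesis e_irr : irreflexive e.

Lemma E0_supp V a b : E0 e V a b -> (a \in V) && (b \in V).
Proof. by case/and3P=> _ -> ->. Qed.

Lemma E0_sym V : symmetric (E0 e V).
Proof. by move=> a b; rewrite /E0 e_sym; case: (a \in V); case: (b \in V); rewrite ?andbF. Qed.

Lemma E0_irr V : irreflexive (E0 e V).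
Proof. by move=> a; rewrite /E0 e_irr. Qed.

Lemma sigma_inj (s : seq T) a b : a \in s -> b \in s -> sigma s a = sigma s b -> a = b.
Proof. by move=> aS bS [] /(index_inj a aS bS). Qed.

Lemma Esig_char V s k u v : is_ordering V s ->
  Esigma e V s k u v <->
  (u != v /\ conn (E0 e V) (fun c => [&& sigma s c <= k, sigma s c < sigma s u
                                       & sigma s c < sigma s v]) u v).
Proof.
move=> [us sV]; elim: k u v => [|k IH] u v /=.
  split=> [h|[nuv C]].
    split; last exact: cstep.
    by apply: contraTneq h => ->; rewrite /E0 e_irr.
  by apply: conn_noint C => c; rewrite /sigma.
rewrite /fill_step; split.
  case/orP=> [/IH [nuv C]|/and5P[nuv uS vS lu /andP[lv /existsP[w /and4P[wS /eqP sw Euw Evw]]]]].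
    split=> //; apply: conn_mono C => [y z|c]; first exact: cstep.
    by case/and3P=> h1 h2 h3; rewrite h2 h3 (leq_trans h1) // andbT.
  have [nuw Cuw] := (IH _ _).1 Euw; have [nvw Cvw] := (IH _ _).1 Evw.
  split=> //; apply: (@ctrans _ _ _ u w v).
  - apply: conn_mono Cuw => [y z|c]; first exact: cstep.
    case/and3P=> h1 h2 h3; apply/and3P; split=> //; lia.
  - by rewrite sw leqnn lu lv.
  - apply: conn_sym (E0_sym V) _.
    apply: conn_mono Cvw => [y z|c]; first exact: cstep.
    case/and3P=> h1 h2 h3; apply/and3P; split=> //; lia.
move=> [nuv C].
have [uV vV] := conn_ends (@E0_supp V) C.
have uS : u \in s by rewrite sV.
have vS : v \in s by rewrite sV.
have easy : (forall c, c \in V -> [&& sigma s c <= k.+1, sigma s c < sigma s u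
                                    & sigma s c < sigma s v] -> sigma s c <= k) ->
            Esigma e V s k u v.
  move=> K; apply/IH; split=> //.
  apply: conn_mono (conn_supp (@E0_supp V) C) => [y z|c /andP[Pc cV]]; first exact: cstep.
  by rewrite (K c cV Pc); case/and3P: Pc => _ -> ->.
case: (leqP (sigma s u) k.+1) => lu.
  by rewrite easy // => c _ /and3P[_ h _]; lia.
case: (leqP (sigma s v) k.+1) => lv.
  by rewrite easy // => c _ /and3P[_ _ h]; lia.
case: (boolP [exists w, (w \in s) && (sigma s w == k.+1)]) => [/existsP[w /andP[wS /eqP sw]]|].
  have notw : forall c, c \in V -> c != w -> sigma s c <= k.+1 -> sigma s c <= k.
    move=> c cV cw h; rewrite leq_eqVlt ltnS in h; case/orP: h => // /eqP h.
    exfalso; move/negP: cw; apply; apply/eqP.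
    have cS : c \in s by rewrite sV.
    exact: sigma_inj cS wS (etrans h (esym sw)).
  have wu : u != w by apply: contraTneq lu => ->; rewrite sw ltnn.
  have wv : v != w by apply: contraTneq lv => ->; rewrite sw ltnn.
  case: (conn_split w C) => [C'|[[E|Cuw] [E'|Cwv]]].
  - apply/orP; left; apply/IH; split=> //.
    apply: conn_mono (conn_supp (@E0_supp V) C') => [y z|c /andP[/andP[Pc cw] cV]].
      exact: cstep.
    by case/and3P: Pc => h1 -> ->; rewrite notw.
  - by move: wu; rewrite E eqxx.
  - by move: wu; rewrite E eqxx.
  - by move: wv; rewrite E' eqxx.
  apply/orP; right; rewrite nuv uS vS /=; apply/existsP; exists w.
  rewrite wS sw eqxx /=; apply/andP; split; apply/IH; split=> //.
    apply: conn_mono (conn_supp (@E0_supp V) Cuw) => [y z|c /andP[/andP[Pc cw] cV]].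
      exact: cstep.
    case/and3P: Pc => h1 -> _; rewrite notw // sw ltnS notw //.
  apply: conn_sym (E0_sym V) _.
  apply: conn_mono (conn_supp (@E0_supp V) Cwv) => [y z|c /andP[/andP[Pc cw] cV]].
    exact: cstep.
  case/and3P: Pc => h1 _ ->; rewrite notw // sw ltnS notw //.
move=> /existsPn nw; rewrite easy // => c cV /and3P[h _ _].
rewrite leq_eqVlt ltnS in h; case/orP: h => // /eqP h.
by move: (nw c); rewrite sV cV h eqxx.
Qed.
End Bridge.

Lemma natD1 a b c p : a <= p -> b <= p -> a != b -> c < a -> c < b -> c <= p - 2.
Proof. lia. Qed.

Section Bridge2.
Variable T : finType.
Variable e : rel T.
Hypothesis e_sym : symmetric e.
Hypothesis e_irr : irreflexive e.

Lemma Dsig_char V s u v : is_ordering V s ->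
  Dsigma e V s u v <-> Dr (E0 e V) (sigma s) u v.
Proof.
move=> ord; have [us sV] := ord; rewrite /Dsigma (Esig_char e_sym e_irr _ _ _ ord).
split=> [[nuv C]|[nuv C]]; split=> //.
  apply: conn_mono C => [y z|c]; first exact: cstep.
  by case/and3P=> _ -> ->.
have [uV vV] := conn_ends (@E0_supp _ e V) C.
apply: conn_mono C => [y z|c]; first exact: cstep.
case/andP=> h1 h2; rewrite h1 h2 /= ?andbT.
have uS : u \in s by rewrite sV.
have vS : v \in s by rewrite sV.
apply: (natD1 (a := sigma s u) (b := sigma s v)) => //.
- by rewrite /sigma index_mem.
- by rewrite /sigma index_mem.
- by apply: contra nuv => /eqP /(sigma_inj uS vS) ->.
Qed.

Lemma gb_to_r (V : {set T}) : gen_bartlett e V ->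
  exists r, {in V &, injective r} /\ GBr (E0 e V) (E0 e V) r.
Proof.
move=> [s [ord nbad]]; have [us sV] := ord.
exists (sigma s); split.
  by move=> a b aV bV; apply: sigma_inj; rewrite sV.
move=> u v w D1 D2 D3.
case E1: (E0 e V u v) => //; case E2: (E0 e V v w) => //; case E3: (E0 e V u w) => //.
exfalso; apply: nbad; exists u, v, w; split.
- by rewrite E1 E2 E3.
- exact: (Dsig_char u v ord).2 D1.
- exact: (Dsig_char v w ord).2 D2.
- exact: (Dsig_char u w ord).2 D3.
Qed.

Lemma r_to_gb (V : {set T}) (r : T -> nat) : {in V &, injective r} -> GBr (E0 e V) (E0 e V) r ->
  gen_bartlett e V.
Proof.
move=> rinj GB.
pose leT := fun a b => r a <= r b.
set s := sort leT (enum V).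
have ord : is_ordering V s.
  by split; [rewrite sort_uniq enum_uniq|move=> x; rewrite mem_sort mem_enum].
have [_ sV] := ord.
have iso : forall a b, a \in V -> b \in V -> sigma s a < sigma s b -> r a < r b.
  move=> a b aV bV h.
  have aS : a \in s by rewrite sV.
  have bS : b \in s by rewrite sV.
  have srt : sorted leT s by apply: sort_sorted => x y; rewrite /leT leq_total.
  have tr : transitive leT by move=> x y z; rewrite /leT; apply: leq_trans.
  have h' : index a s < index b s by move: h; rewrite /sigma ltnS.
  have le : r a <= r b := @sorted_ltn_index _ leT tr s srt a b aS bS h'.
  rewrite ltn_neqAle le andbT; apply/negP => /eqP /rinj E.
  by move: h; rewrite E // ltnn.
exists s; split=> // -[u [v [w [/and3P[n1 n2 n3] D1 D2 D3]]]].
have conv : forall a b, Dsigma e V s a b -> Dr (E0 e V) r a b.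
  move=> a b /(Dsig_char a b ord) [nab C]; split=> //.
  have [aV bV] := conn_ends (@E0_supp _ e V) C.
  apply: conn_mono (conn_supp (@E0_supp _ e V) C) => [y z|c /andP[/andP[h1 h2] cV]].
    exact: cstep.
  by rewrite !iso.
have := GB u v w (conv _ _ D1) (conv _ _ D2) (conv _ _ D3).
by rewrite (negbTE n1) (negbTE n2) (negbTE n3).
Qed.

End Bridge2.

Lemma natC m M k : m < M -> m = M + k -> False. Proof. lia. Qed.
Lemma natE M k m : m < M -> M + k < m -> False. Proof. lia. Qed.

Section Comb.
Variable T : finType.
Variable e : rel T.
Hypothesis e_sym : symmetric e.
Hypothesis e_irr : irreflexive e.

Definition GBR (V : {set T}) :=
  exists r, {in V &, injective r} /\ GBr (E0 e V) (E0 e V) r.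

Lemma memV (V V1 V2 : {set T}) a : V = V1 :|: V2 -> a \in V -> a \notin V2 :\: V1 -> a \in V1.
Proof. by move=> -> ; rewrite in_setU in_setD; case: (a \in V1); case: (a \in V2). Qed.

Lemma side (V V1 V2 : {set T}) : V = V1 :|: V2 ->
  (forall x y, x \in V1 :&: V2 -> y \in V1 :&: V2 -> x != y -> e x y) ->
  (forall x y, x \in V1 :\: V2 -> y \in V2 :\: V1 -> ~~ e x y) ->
  (forall y z, ~~ (y \in V2 :\: V1) -> ~~ (z \in V2 :\: V1) ->
      E0 e V y z -> E0 e V1 y z) /\
  (forall y z y' z', ~~ (y \in V2 :\: V1) -> ~~ (z \in V2 :\: V1) -> y != z ->
      y' \in V2 :\: V1 -> z' \in V2 :\: V1 -> E0 e V y y' -> E0 e V z z' ->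
      E0 e V1 y z).
Proof.
move=> VU Scl noAB; split.
  move=> y z ny nz /and3P[eyz yV zV].
  by rewrite /E0 eyz (memV VU yV ny) (memV VU zV nz).
move=> y z y' z' ny nz nyz y'B z'B /and3P[e1 yV _] /and3P[e2 zV _].
have y1 := memV VU yV ny; have z1 := memV VU zV nz.
have inS : forall a a', a \in V1 -> a' \in V2 :\: V1 -> e a a' -> a \in V1 :&: V2.
  move=> a a' a1 a'B eaa; rewrite in_setI a1 /=.
  apply: contraT => a2; move: (noAB a a'); rewrite in_setD a1 a2 => /(_ isT a'B).
  by rewrite eaa.
by rewrite /E0 Scl ?y1 ?z1 //; [apply: inS e1|apply: inS e2].
Qed.

Lemma comb (V V1 V2 : {set T}) :
  decomposition e V V1 V2 -> GBR V1 -> GBR V2 -> GBR V.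
Proof.
move=> [VU _ Scl noAB] [r1 [rinj1 GB1]] [r2 [rinj2 GB2]].
have noBA : forall x y, x \in V2 :\: V1 -> y \in V1 :\: V2 -> ~~ e x y.
  by move=> x y xB yA; rewrite e_sym; apply: noAB.
have SclC : forall x y, x \in V2 :&: V1 -> y \in V2 :&: V1 -> x != y -> e x y.
  by move=> x y; rewrite setIC; apply: Scl.
have VUC : V = V2 :|: V1 by rewrite setUC.
have [c1A c2A] := side VU Scl noAB.
have [c1B c2B] := side VUC SclC noBA.
set S := V1 :&: V2.
have clS : forall a b, a \in S -> b \in S -> a != b -> E0 e V2 a b.
  move=> a b aS bS nab; rewrite /E0 Scl //.
  by move: aS bS; rewrite !in_setI => /andP[_ ->] /andP[_ ->].
have [r2' [rinj2' GB2' lastS]] :=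
  @CL T #|V2| V2 (E0 e V2) (E0 e V2) r2 S erefl (@E0_supp _ e V2)
      (E0_sym e_sym V2) (E0_irr e_irr V2) (E0_sym e_sym V2) rinj2 GB2 (subsetIr V1 V2) clS.
set M := (\max_(a in V2) r2' a).+1.
have hM : forall a, a \in V2 -> r2' a < M.
  by move=> a aV; rewrite ltnS; exact: leq_bigmax_cond.
have V1V : V1 \subset V by rewrite VU subsetUl.
have V2V : V2 \subset V by rewrite VU subsetUr.
have B2 : forall a, a \in V2 :\: V1 -> a \in V2 by move=> a; rewrite in_setD => /andP[].
have A1 : forall a, a \in V1 :\: V2 -> a \in V1 by move=> a; rewrite in_setD => /andP[].
pose r := fun a => if a \in V2 :\: V1 then r2' a else M + r1 a.
exists r; split.
  move=> a b aV bV; rewrite /r.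
  case aB: (a \in V2 :\: V1); case bB: (b \in V2 :\: V1).
  - by apply: rinj2'; apply: B2.
  - by move=> E; exfalso; apply: (natC (hM a (B2 a aB)) E).
  - by move=> E; exfalso; apply: (natC (hM b (B2 b bB)) (esym E)).
  - by move/addnI; apply: rinj1; apply: memV VU _ _; rewrite ?aB ?bB.
apply: (GBr_min (U := mem V) (E0_sym e_sym V) (E0_sym e_sym V) (@E0_supp _ e V)).
  move=> a b aV bV; rewrite /r.
  case aB: (a \in V2 :\: V1); case bB: (b \in V2 :\: V1).
  - by apply: rinj2'; apply: B2.
  - by move=> E; exfalso; apply: (natC (hM a (B2 a aB)) E).
  - by move=> E; exfalso; apply: (natC (hM b (B2 b bB)) (esym E)).
  - by move/addnI; apply: rinj1; apply: memV VU _ _; rewrite ?aB ?bB.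
move=> u v w nBuv nBuw nBvw ruv ruw Duv Duw Dvw.
have [_ Cuv] := Duv; have [_ Cuw] := Duw.
have [uV vV] := conn_ends (@E0_supp _ e V) Cuv.
have [_ wV] := conn_ends (@E0_supp _ e V) Cuw.
have sub2 : forall a b, E0 e V2 a b -> E0 e V a b.
  by move=> a b /and3P[eab aV2 bV2]; rewrite /E0 eab (subsetP V2V _ aV2) (subsetP V2V _ bV2).
have sub1 : forall a b, E0 e V1 a b -> E0 e V a b.
  by move=> a b /and3P[eab aV1 bV1]; rewrite /E0 eab (subsetP V1V _ aV1) (subsetP V1V _ bV1).
case uB: (u \in V2 :\: V1).
  have ru : r u = r2' u by rewrite /r uB.
  have u2 := B2 u uB.
  have hu := hM u u2.
  have ordc : forall c, c \in V -> r c < r u -> (c \in V2 :\: V1) && (r2' c < r2' u).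
    move=> c cV; rewrite ru /r; case cB: (c \in V2 :\: V1) => //= h.
    by exfalso; exact: natE hu h.
  have uA : u \notin V1 :\: V2.
    by apply/negP; rewrite in_setD => /andP[_ u1']; move: uB; rewrite in_setD u1'.
  have notA : forall b, Dr (E0 e V) r u b -> b \notin V1 :\: V2.
    move=> b [nub Cub]; apply/negP => bA.
    have [_ J _] := conn_short (X := fun a => a \in V1 :\: V2) (E0_sym e_sym V) c1B c2B Cub.
    have [q [y [nq yA Eqy D]]] := J uA bA.
    have qV : q \in V by case/and3P: Eqy.
    have qB : q \in V2 :\: V1.
      by case: D => [->//|[/andP[h _] _]]; have /andP[] := ordc q qV h.
    by move: (noBA q y qB yA); case/and3P: Eqy => ->.
  have toV2 : forall b, b \in V -> b \notin V1 :\: V2 -> b \in V2 := fun b => memV VUC.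
  have ord2 : forall b, b \in V2 -> r u < r b -> r2' u < r2' b.
    move=> b b2; rewrite ru /r; case bB: (b \in V2 :\: V1) => // _.
    apply: lastS => //.
      by rewrite /S in_setI; move: uB; rewrite in_setD; case: (u \in V1).
    by rewrite /S in_setI b2 andbT; move: bB; rewrite in_setD b2 andbT => /negbFE.
  have conv : forall b, b \in V -> r u < r b -> Dr (E0 e V) r u b -> Dr (E0 e V2) r2' u b.
    move=> b bV rub D; have bA := notA b D; have [nub Cub] := D; split=> //.
    have [I _ _] := conn_short (X := fun a => a \in V1 :\: V2) (E0_sym e_sym V) c1B c2B Cub.
    case: (I uA bA) => [E|C']; first by rewrite E eqxx in nub.
    apply: conn_mono (conn_supp (@E0_supp _ e V2) C') => [y z|c /andP[/andP[h1 h2] c2]].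
      exact: cstep.
    have /andP[_ hc] := ordc c (subsetP V2V _ c2) h1.
    by rewrite hc /=; apply: ltn_trans hc (ord2 b (toV2 b bV bA) rub).
  have D1 := conv v vV ruv Duv; have D3 := conv w wV ruw Duw.
  have D2 := Dr_earliest (E0_sym e_sym V2) D1 D3
    (ord2 v (toV2 v vV (notA v Duv)) ruv) (ord2 w (toV2 w wV (notA w Duw)) ruw) Dvw.1.
  move: (GB2' u v w D1 D2 D3) => /orP[/orP[/sub2 h|/sub2 h]|/sub2 h].
  - by rewrite h in nBuv.
  - by rewrite h in nBvw.
  - by rewrite h in nBuw.
have ru : r u = M + r1 u by rewrite /r uB.
have u1 : u \in V1 := memV VU uV (negbT uB).
have laterNB : forall b, b \in V -> r u < r b -> b \notin V2 :\: V1.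
  move=> b bV; rewrite ru /r; case bB: (b \in V2 :\: V1) => //= h.
  by exfalso; exact: natE (hM b (B2 b bB)) h.
have ord1 : forall b, b \in V -> r u < r b -> r1 u < r1 b.
  move=> b bV h; have nb := laterNB b bV h.
  by move: h; rewrite ru /r (negbTE nb) ltn_add2l.
have ordc : forall c, c \in V1 -> r c < r u -> r1 c < r1 u.
  move=> c c1; have nc : c \notin V2 :\: V1 by rewrite in_setD c1.
  by rewrite ru /r (negbTE nc) ltn_add2l.
have conv : forall b, b \in V -> r u < r b -> Dr (E0 e V) r u b -> Dr (E0 e V1) r1 u b.
  move=> b bV rub [nub Cub]; have nb := laterNB b bV rub; split=> //.
  have [I _ _] := conn_short (X := fun a => a \in V2 :\: V1) (E0_sym e_sym V) c1A c2A Cub.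
  case: (I (negbT uB) nb) => [E|C']; first by rewrite E eqxx in nub.
  apply: conn_mono (conn_supp (@E0_supp _ e V1) C') => [y z|c /andP[/andP[h1 h2] c1]].
    exact: cstep.
  have hc := ordc c c1 h1.
  by rewrite hc /=; apply: ltn_trans hc (ord1 b bV rub).
have D1 := conv v vV ruv Duv; have D3 := conv w wV ruw Duw.
have D2 := Dr_earliest (E0_sym e_sym V1) D1 D3 (ord1 v vV ruv) (ord1 w wV ruw) Dvw.1.
move: (GB1 u v w D1 D2 D3) => /orP[/orP[/sub1 h|/sub1 h]|/sub1 h].
- by rewrite h in nBuv.
- by rewrite h in nBvw.
- by rewrite h in nBuw.
Qed.

Lemma main_ind V : decomposes_into e (gen_bartlett e) V -> GBR V.
Proof.
elim=> [V' _ gb|V' V1 V2 dec _ IH1 _ IH2]; first exact: gb_to_r.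
exact: comb dec IH1 IH2.
Qed.
End Comb.

Theorem lemma3 (T : finType) (e : rel T) (e_sym : symmetric e)
  (e_irr : irreflexive e) :
  decomposes_into e (gen_bartlett e) [set: T] -> gen_bartlett e [set: T].
Proof.
move=> D; have [r [ri g]] := main_ind e_sym e_irr D.
exact: (r_to_gb e_sym e_irr ri g).
Qed.
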